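(* Consider an instance of $\mathrm{BAL}(\mu,\nu)$. Let $\ell\in\{1,\dots,\nu-1\}$ and $\mathcal S\subseteq\hat V$ with $|\mathcal S|\le k-(\nu-\ell)$, and let $U=\{\tau\subseteq\hat V:|\tau|=\nu-\ell\}$. Then $\tau^*=\arg\max\{\Phi^{\ge\ell}(\mathcal S\cup\tau):\tau\in U\}$ satisfies \[ \Phi^{\ge\ell}(\mathcal S\cup\tau^* )-\Phi^{\ge\ell}(\mathcal S)\ \ge\ \frac{\Phi^{\ge\ell}(\mathcal S^*_{\ge\ell})-\Phi^{\ge\ell}(\mathcal S)}{\binom{k}{\nu-\ell}}, \] where $\mathcal S^*_{\ge\ell}$ is an optimal solution of size $k$ to maximizing $\Phi^{\ge\ell}$.
   Context: Triggering model: for a directed graph $G=(V,E)$ and $p:E\to[0,1]$, an outcome $X=(T_v)_{v\in V}$ is obtained by having each node $v$ independently choose a subset $T_v$ of its in-neighbours $N_v$, with $T_v=S$ with probability $\prod_{u\in S}p_{uv}\prod_{u\in N_v\setminus S}(1-p_{uv})$; $\rho_X(A)$ is the set of nodes reachable from $A\subseteq V$ via arcs $\{(u,v):u\in T_v\}$. $\mathrm{BAL}(\mu,\nu)$ for integer constants $\mu\ge\nu\ge2$: instance = directed graph $G=(V,E)$, probability functions $p_1,\dots,p_\mu:E\to[0,1]$, seed sets $\mathcal I=(I_1,\dots,I_\mu)$, budget $k\ge2$. Let $\hat V=V\times[\mu]$; a set $\mathcal S\subseteq\hat V$ is identified with $(S_1,\dots,S_\mu)$, $S_i=\{v:(v,i)\in\mathcal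 S\}$. An outcome profile $\mathcal X=(X_1,\dots,X_\mu)$ consists of outcomes $X_i$ w.r.t. $p_i$ (independent in the heterogeneous setting; in the correlated setting all $p_i$ are equal and $X_1=\dots=X_\mu$). Campaign $i$ reaches $v$ from seeds $A_i$ if $v\in\rho_{X_i}(A_i)$. $V^j_{\mathcal X}$ is the set of nodes reached by exactly $j$ campaigns from seeds $\mathcal I$. For $\ell\ge0$, $\Phi^{\ge\ell}(\mathcal S)$ is the expected number (over $\mathcal X$) of nodes $v\notin\bigcup_{j<\ell}V^j_{\mathcal X}$ reached by none or by at least $\nu$ campaigns from seeds $(I_i\cup S_i)_i$. *)

(* Defs.v *)
From HB Require Import structures.
From mathcomp Require Import all_boot all_order all_algebra.
Set Implicit Arguments. Unset Strict Implicit. Unset Printing Implicit Defensive.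
Import Order.TTheory GRing.Theory Num.Theory.
Local Open Scope ring_scope.

Section Triggering.
Variables (R : realFieldType) (V : finType).

(* An outcome X = (T_v)_v : each node v chooses a subset T_v of nodes. *)
Definition outcome := {ffun V -> {set V}}.

(* Probability of outcome X in the triggering model for graph E (arc (u,v)
   iff E u v) and edge probabilities p : each v independently picks T_v among
   its in-neighbours N_v, u in T_v with prob. p u v. *)
Definition outcome_prob (E : rel V) (p : V -> V -> R) (X : outcome) : R :=
  \prod_(v : V) \prod_(u : V)
     (if E u v then (if u \in X v then p u v else 1 - p u v)
      else (if u \in X v then 0 else 1)).

Definition reach (X : outcome) (A : {set V}) : {set V} :=
  [set v | [exists a in A, connect (fun u w => u \in X w) a v]].
End Triggering.

Section BAL.
Variables (R : realFieldType) (V : finType) (mu nu : nat).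

Definition profile := {ffun 'I_mu -> outcome V}.

(* Heterogeneous setting (corr = false):
   independent outcomes X_i w.r.t. p_i.  Correlated setting (corr = true):
   all p_i are equal (assumed in the theorem) and X_1 = ... = X_mu is a single
   outcome w.r.t. this common probability function. *)
Definition profile_prob (corr : bool) (E : rel V) (p : 'I_mu -> V -> V -> R)
    (Xs : profile) : R :=
  if corr then
    match [pick i : 'I_mu] with
    | Some i0 => if [forall i, Xs i == Xs i0]
                 then outcome_prob E (p i0) (Xs i0) else 0
    | None => 0
    end
  else \prod_(i : 'I_mu) outcome_prob E (p i) (Xs i).

Definition nreached (Xs : profile) (A : {ffun 'I_mu -> {set V}}) (v : V) : nat :=
  #|[set i : 'I_mu | v \in reach (Xs i) (A i)]|.

Definition slice (S : {set V * 'I_mu}) (i : 'I_mu) : {set V} :=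
  [set v | (v, i) \in S].

Definition augment (I : {ffun 'I_mu -> {set V}}) (S : {set V * 'I_mu}) :
  {ffun 'I_mu -> {set V}} := [ffun i => I i :|: slice S i].

Definition Phi (corr : bool) (E : rel V) (p : 'I_mu -> V -> V -> R)
    (I : {ffun 'I_mu -> {set V}}) (l : nat) (S : {set V * 'I_mu}) : R :=
  \sum_(Xs : profile) profile_prob corr E p Xs *
    (#|[set v : V | [forall j : 'I_l, nreached Xs I v != j] &&
        ((nreached Xs (augment I S) v == 0%N) ||
         (nu <= nreached Xs (augment I S) v)%N)]|)%:R.
End BAL.

(* Main.v *)
Require Import Defs.
From HB Require Import structures.
From mathcomp Require Import all_boot all_order all_algebra.
From mathcomp Require Import zify ring lra.
Import Order.TTheory GRing.Theory Num.Theory.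
Local Open Scope ring_scope.

Lemma subset_exists (T : finType) (X : {set T}) m :
  (m <= #|X|)%N -> exists Y : {set T}, Y \subset X /\ #|Y| = m.
Proof.
move=> h.
have : (0 < #|[set Y : {set T} | Y \subset X & #|Y| == m]|)%N.
  by rewrite cards_draws bin_gt0.
by case/card_gt0P => Y; rewrite inE => /andP[a /eqP b]; exists Y.
Qed.

Lemma card_sumb (T : finType) (P : pred T) :
  #|[set v | P v]| = (\sum_(v : T) (P v : nat))%N.
Proof.
rewrite -sum1_card big_mkcond; apply: eq_bigr => v _; rewrite inE.
by case: (P v).
Qed.

Section H.
Variables (V : finType) (mu nu : nat) (Xs : profile V mu)
  (I : {ffun 'I_mu -> {set V}}) (l : nat).

Definition RS (A : {ffun 'I_mu -> {set V}}) v :=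
  [set i : 'I_mu | v \in reach (Xs i) (A i)].

Lemma reach_mono (X : outcome V) (A B : {set V}) : A \subset B -> reach X A \subset reach X B.
Proof.
move=> AB; apply/subsetP=> v; rewrite !inE => /existsP [a /andP[aA c]].
by apply/existsP; exists a; rewrite (subsetP AB).
Qed.

Lemma RS_mono (A B : {ffun 'I_mu -> {set V}}) v : (forall i, A i \subset B i) -> RS A v \subset RS B v.
Proof.
move=> h; apply/subsetP=> i; have := subsetP (@reach_mono (Xs i) _ _ (h i)) v.
by rewrite !inE.
Qed.

Lemma augment_mono (S T : {set V * 'I_mu}) : S \subset T ->
  forall i, augment I S i \subset augment I T i.
Proof.
move=> h i; rewrite !ffunE; apply: setUS; apply/subsetP=> v; rewrite !inE.
exact: (subsetP h).
Qed.

Lemma I_sub_aug (S : {set V * 'I_mu}) i : I i \subset augment I S i.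
Proof. by rewrite ffunE subsetUl. Qed.

Lemma forall_ord (n : nat) : [forall j : 'I_l, n != j] = (l <= n)%N.
Proof.
apply/forallP/idP => [h|h j].
  rewrite leqNgt; apply/negP=> lt; have := h (Ordinal lt).
  by rewrite /= eqxx.
by apply/eqP=> e; move: (ltn_ord j); rewrite -e ltnNge h.
Qed.

Definition ok (S : {set V * 'I_mu}) v :=
  [forall j : 'I_l, nreached Xs I v != j] &&
  ((nreached Xs (augment I S) v == 0%N) || (nu <= nreached Xs (augment I S) v)%N).

Lemma okE (S : {set V * 'I_mu}) v : (1 <= l)%N ->
  ok S v = (l <= #|RS I v|)%N && (nu <= #|RS (augment I S) v|)%N.
Proof.
move=> l1; rewrite /ok forall_ord.
have h2 : (#|RS I v| <= #|RS (augment I S) v|)%N.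
  by apply: subset_leq_card; apply: RS_mono => i; apply: I_sub_aug.
rewrite /nreached -/(RS I v) -/(RS (augment I S) v).
case: (leqP l #|RS I v|) => h //=.
case E: (#|RS (augment I S) v| == 0%N) => //=.
move/eqP: E h2 => ->; lia.
Qed.

Lemma ok_mono (S S' : {set V * 'I_mu}) v : (1 <= l)%N -> S \subset S' -> ok S v -> ok S' v.
Proof.
move=> l1 SS; rewrite !okE // => /andP[-> h] /=.
apply: (leq_trans h); apply: subset_leq_card; apply: RS_mono.
exact: augment_mono.
Qed.

Definition TT (Sopt : {set V * 'I_mu}) :=
  [set t : {set V * 'I_mu} | (t \subset Sopt) && (#|t| == nu - l)%N].

Lemma key (S Sopt : {set V * 'I_mu}) v : (1 <= l)%N -> (l <= nu)%N -> (nu - l <= #|Sopt|)%N ->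
  ok (S :|: Sopt) v -> exists2 t, t \in TT Sopt & ok (S :|: t) v.
Proof.
move=> l1 lnu hS; rewrite !okE // => /andP[hI hB].
set A := RS (augment I S) v.
set B := RS (augment I (S :|: Sopt)) v.
set D := B :\: A.
have [D' [D'D cD']] := @subset_exists _ D (minn #|D| (nu - l)) (geq_minl _ _).
pose f i := [pick u | ((u, i) \in Sopt) && connect (fun a b => a \in Xs i b) u v].
pose W := [set x : V * 'I_mu | (x.2 \in D') && (f x.2 == Some x.1)].
have WS : W \subset Sopt.
  apply/subsetP=> [[u i]]; rewrite inE /= => /andP[_ /eqP]; rewrite /f.
  by case: pickP => // u' /andP[h _] [<-].
have cW : (#|W| <= #|D'|)%N.
  rewrite -(card_in_imset (f:=snd)).
    apply: subset_leq_card; apply/subsetP => i /imsetP[x]; rewrite inE.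
    by move=> /andP[h _] ->.
  move=> [u i] [u' i']; rewrite !inE /= => /andP[_ /eqP e] /andP[_ /eqP e'] /= ei.
  by subst i'; rewrite e in e'; case: e' => ->.
have AD : A :|: D' \subset RS (augment I (S :|: W)) v.
  apply/subsetP=> i; rewrite inE => /orP[iA|iD].
    apply: (subsetP (@RS_mono _ _ v (@augment_mono _ _ (subsetUl S W)))).
    exact: iA.
  have := subsetP D'D i iD; rewrite !inE => /andP[niA].
  move=> /existsP[a /andP[aIn c]].
  move: aIn; rewrite ffunE !inE => /orP[aI|/orP[aS|aO]].
    by move: niA; apply: contraNT => _; apply/existsP; exists a;
      rewrite ffunE !inE aI.
    by move: niA; apply: contraNT => _; apply/existsP; exists a;
      rewrite ffunE !inE aS orbT.
  have [u Pu Eu] : exists2 u, ((u, i) \in Sopt) &&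
       connect (fun a b => a \in Xs i b) u v & f i = Some u.
    rewrite /f; case: pickP => [u h|none]; first by exists u.
    by have := none a; rewrite aO c.
  case/andP: Pu => _ cu.
  apply/existsP; exists u; rewrite cu andbT ffunE !inE.
  by rewrite /= iD Eu eqxx !orbT.
have cAD : #|A :|: D'| = (#|A| + #|D'|)%N.
  have I0 : A :&: D' = set0.
    apply/setP=> i; rewrite in_setI in_set0; case iA: (i \in A) => //=.
    case iD: (i \in D') => //; have := subsetP D'D i iD; rewrite in_setD iA.
    by [].
  by have := cardsUI A D'; rewrite I0 cards0 addn0.
have cD : (#|B| <= #|A| + #|D|)%N.
  rewrite /D cardsD.
  have : (#|B :&: A| <= #|A|)%N by apply: subset_leq_card; apply: subsetIr.
  lia.
have hA : (l <= #|A|)%N.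
  apply: (leq_trans hI); apply: subset_leq_card; apply: RS_mono => i.
  exact: I_sub_aug.
have nuW : (nu <= #|RS (augment I (S :|: W)) v|)%N.
  have hB' : (nu <= #|B|)%N := hB.
  have := subset_leq_card AD; rewrite cAD cD'. move: hB' cD hA. lia.
have cWS : #|Sopt :\: W| = (#|Sopt| - #|W|)%N.
  by rewrite cardsD (setIidPr WS).
have [Y [YS cY]] := @subset_exists _ (Sopt :\: W) (nu - l - #|W|) ltac:(
  rewrite cWS; have := subset_leq_card WS; lia).
exists (W :|: Y).
  rewrite inE; apply/andP; split.
    by rewrite subUset WS (subset_trans YS (subsetDl _ _)).
  have -> : (#|W :|: Y| = #|W| + #|Y|)%N.
    have I0 : W :&: Y = set0.
      apply/setP=> x; rewrite in_setI in_set0; case xW: (x \in W) => //=.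
      case xY: (x \in Y) => //; have := subsetP YS x xY; rewrite in_setD xW.
      by [].
    by have := cardsUI W Y; rewrite I0 cards0 addn0.
  apply/eqP; rewrite cY; move: cW cD'; lia.
rewrite okE // hI /=; apply: (leq_trans nuW); apply: subset_leq_card.
by apply: RS_mono; apply: augment_mono; apply: setUS; apply: subsetUl.
Qed.

Definition gc (S : {set V * 'I_mu}) := #|[set v | ok S v]|.

Lemma gcE (S : {set V * 'I_mu}) : gc S = (\sum_(v : V) (ok S v : nat))%N.
Proof. exact: (@card_sumb _ (ok S)). Qed.

Lemma g_ineq (S Sopt : {set V * 'I_mu}) : (1 <= l)%N -> (l <= nu)%N -> (nu - l <= #|Sopt|)%N ->
  (gc (S :|: Sopt) + #|TT Sopt| * gc S <=
   gc S + \sum_(t in TT Sopt) gc (S :|: t))%N.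
Proof.
move=> l1 lnu hS; rewrite !gcE.
rewrite [X in (_ <= _ + X)%N](eq_bigr (fun t => \sum_(v : V) (ok (S :|: t) v : nat))%N); last by move=> t _; rewrite gcE.
rewrite exchange_big big_distrr /= -!big_split /=.
apply: leq_sum => v _.
case b: (ok S v).
  rewrite (eq_bigr (fun _ => 1%N)); last first.
    by move=> t _; rewrite (@ok_mono S (S :|: t) v l1 (subsetUl S t) b).
  rewrite sum1_card; case: (ok (S :|: Sopt) v); rewrite /=; lia.
case b0: (ok (S :|: Sopt) v) => //=.
have [t tT bt] := @key S Sopt v l1 lnu hS b0.
rewrite muln0 (bigD1 t) //= bt; lia.
by rewrite muln0.
Qed.

Lemma gc_mono (S S' : {set V * 'I_mu}) : (1 <= l)%N -> S \subset S' -> (gc S <= gc S')%N.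
Proof.
move=> l1 SS; apply: subset_leq_card; apply/subsetP=> v; rewrite !inE.
exact: ok_mono.
Qed.

End H.

Lemma outcome_prob_ge0 (R : realFieldType) (V : finType) (E : rel V)
  (p : V -> V -> R) X : (forall u v, 0 <= p u v <= 1) ->
  0 <= outcome_prob E p X.
Proof.
move=> hp; rewrite /outcome_prob; apply: prodr_ge0 => v _.
apply: prodr_ge0 => u _; case: (E u v); case: (u \in X v) => //.
  by case/andP: (hp u v).
by case/andP: (hp u v) => _ h; rewrite subr_ge0.
Qed.

Lemma profile_prob_ge0 (R : realFieldType) (V : finType) (mu : nat) corr
  (E : rel V) (p : 'I_mu -> V -> V -> R) Xs :
  (forall i u v, 0 <= p i u v <= 1) -> 0 <= profile_prob corr E p Xs.
Proof.
move=> hp; rewrite /profile_prob; case: corr.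
  case: pickP => [i0 _|_] //; case: ifP => _ //.
  exact: outcome_prob_ge0.
by apply: prodr_ge0 => i _; apply: outcome_prob_ge0.
Qed.

Theorem mainTheorem5 (R : realFieldType) (V : finType) (mu nu : nat)
  (corr : bool) (E : rel V) (p : 'I_mu -> V -> V -> R)
  (I : {ffun 'I_mu -> {set V}}) (k l : nat)
  (S tau Sopt : {set V * 'I_mu}) :
  (2 <= nu)%N -> (nu <= mu)%N -> (2 <= k)%N ->
  (forall i u v, 0 <= p i u v <= 1) ->
  (corr -> forall i j, p i = p j) ->
  (1 <= l)%N -> (l <= nu - 1)%N ->
  (#|S| <= k - (nu - l))%N ->
  #|tau| = (nu - l)%N ->
  (forall t : {set V * 'I_mu}, #|t| = (nu - l)%N ->
     Phi nu corr E p I l (S :|: t) <= Phi nu corr E p I l (S :|: tau)) ->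
  #|Sopt| = k ->
  (forall T : {set V * 'I_mu}, #|T| = k ->
     Phi nu corr E p I l T <= Phi nu corr E p I l Sopt) ->
  Phi nu corr E p I l (S :|: tau) - Phi nu corr E p I l S >=
    (Phi nu corr E p I l Sopt - Phi nu corr E p I l S) / ('C(k, nu - l))%:R.
Proof.
move=> nu2 _ _ hp _ l1 lnu _ _ hmax cO _.
have w0 := fun Xs => @profile_prob_ge0 R V mu corr E p Xs hp.
have PE : forall X, Phi nu corr E p I l X =
   \sum_(Xs : profile V mu) profile_prob corr E p Xs * (@gc V mu nu Xs I l X)%:R.
  by [].
have Pmono : forall X Y : {set V * 'I_mu}, X \subset Y ->
    Phi nu corr E p I l X <= Phi nu corr E p I l Y.
  move=> X Y XY; rewrite !PE; apply: ler_sum => Xs _.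
  by apply: ler_wpM2l => //; rewrite ler_nat; apply: gc_mono.
have [hk|hk] := leqP (nu - l) k; last first.
  rewrite bin_small // mulr0n invr0 mulr0 subr_ge0; apply: Pmono; exact: subsetUl.
have Cpos : (0 < 'C(k, nu - l))%N by rewrite bin_gt0.
set C := 'C(k, nu - l).
have cT : #|@TT V mu nu l Sopt| = C by rewrite /C -cO -cards_draws.
have key_R : Phi nu corr E p I l (S :|: Sopt) + C%:R * Phi nu corr E p I l S <=
    Phi nu corr E p I l S + \sum_(t in @TT V mu nu l Sopt) Phi nu corr E p I l (S :|: t).
  rewrite !PE mulr_sumr exchange_big /= -!big_split /=.
  apply: ler_sum => Xs _.
  rewrite -mulr_sumr mulrCA -mulrDr -mulrDr -natrM -natrD -natr_sum -natrD.
  apply: ler_wpM2l => //; rewrite ler_nat -cT.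
  apply: g_ineq => //; [lia | rewrite cO; lia].
have sumT : \sum_(t in @TT V mu nu l Sopt) Phi nu corr E p I l (S :|: t) <=
    C%:R * Phi nu corr E p I l (S :|: tau).
  rewrite -cT mulr_natl -sumr_const; apply: ler_sum => t.
  by rewrite inE => /andP[_ /eqP ct]; apply: hmax.
have PO : Phi nu corr E p I l Sopt <= Phi nu corr E p I l (S :|: Sopt).
  by apply: Pmono; apply: subsetUr.
have Cr : 0 < (C%:R : R) by rewrite ltr0n.
rewrite ler_pdivrMr //.
move: key_R sumT PO Cr.
set a := Phi _ _ _ _ _ _ (S :|: Sopt).
set b := Phi _ _ _ _ _ _ S.
set c := Phi _ _ _ _ _ _ (S :|: tau).
set d := Phi _ _ _ _ _ _ Sopt.
set s := \sum_(t in _) _.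
move=> *; nra.
Qed.
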